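(* Let $R$ be a commutative ring, $S$ a subring of $R$, $I$ an ideal of $S$, $n\ge1$ and $f\in(T_n(R))[x]$. [Right] Let $1\le i\le n$. The following are equivalent: (1) for every $C\in T_n(S)$ all entries of the $i$-th row of $f(C)$ lie in $I$; (2) for all $C\in T_n(S)$ and all $h,j$ with $i\le h\le j\le n$, $[f_{ih}(C)]_{hj}\in I$; (3) for all $h,j$ with $i\le h\le j\le n$, $\langle f_{ih},p_{hj}\rangle\in\mathrm{Int}(S^{\ast},I)$; (4) $f_{ih}\in\mathrm{Int}_R(T_{n-h+1}(S),T_{n-h+1}(I))$ for $h=i,\dots,n$. [Left] Let $1\le j\le n$. The following are equivalent: (1) for every $C\in T_n(S)$ all entries of the $j$-th column of $f(C)_\ell$ lie in $I$; (2) for all $C\in T_n(S)$ and all $i,h$ with $1\le i\le h\le j$, $[f_{hj}(C)]_{ih}\in I$; (3) for all $i,h$ with $1\le i\le h\le j$, $\langle f_{hj},p_{ih}\rangle\in\mathrm{Int}(S^{\ast},I)$; (4) $f_{hj}\in\mathrm{Int}_R(T_h(S),T_h(I))$ for $h=1,\dots,j$.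
   Context: $\mathbb{N}=\{1,2,3,\dots\}$. $T_n(A)$ denotes the ring of upper triangular $n\times n$ matrices over a ring $A$, and $[M]_{ij}$ the $(i,j)$-entry of a matrix $M$. For $f=\sum_k F_kx^k\in(T_n(R))[x]$ with $F_k\in T_n(R)$, right substitution is $f(C)=\sum_kF_kC^k$ and left substitution is $f(C)_\ell=\sum_kC^kF_k$. Writing $f_{ij}^{(k)}=[F_k]_{ij}$, set $f_{ij}=\sum_k f_{ij}^{(k)}x^k\in R[x]$. For $g\in R[x]$, $g(C)$ is the usual evaluation at a matrix, and $\mathrm{Int}_R(T_m(S),T_m(I))=\{g\in R[x]\mid \forall C\in T_m(S):\ g(C)\in T_m(I)\}$. Let $R[X]=R[\{x_{ab}\mid a,b\in\mathbb{N}\}]$. Path polynomials: for $1\le i\le j$ and $k>0$, $p_{ij}^{(k)}=\sum_{i=i_1\le i_2\le\dots\le i_{k+1}=j} x_{i_1i_2}\cdots x_{i_ki_{k+1}}$; for $1\le i\le j$, $p_{ij}^{(0)}=\delta_{ij}$; for $i>j$, $p_{ij}^{(k)}=0$. For $g=\sum_kg_kx^k\in R[x]$, $\langle g,p_{ij}\rangle=\sum_k g_kp_{ij}^{(k)}\in R[X]$. $\mathrm{Int}(S^{\ast},I)$ denotes the set of polynomials in $R[X]$ that take values in $I$ whenever elements of $S$ are substituted (independently) for all the variables. *)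

(* Defs.v *)
From HB Require Import structures.
From mathcomp Require Import all_boot all_order all_algebra.
Set Implicit Arguments. Unset Strict Implicit. Unset Printing Implicit Defensive.
Import Order.TTheory GRing.Theory Num.Theory.
Local Open Scope ring_scope.

Section Defs.
Variable R : comNzRingType.

Definition ideal_of (S I : {pred R}) : Prop :=
  [/\ {subset I <= S}, 0 \in I, {in I &, forall a b, a - b \in I}
    & {in S & I, forall s a, s * a \in I}].

Definition Tmx (P : {pred R}) m (A : 'M[R]_m) : Prop :=
  (forall i j : 'I_m, (j < i)%N -> A i j = 0) /\ (forall i j : 'I_m, A i j \in P).

Definition mxpow m (C : 'M[R]_m) (k : nat) : 'M[R]_m := iter k (mulmx C) 1%:M.

Definition peval m (g : {poly R}) (C : 'M[R]_m) : 'M[R]_m :=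
  \sum_(k < size g) g`_k *: mxpow C k.

Definition rsubst n (f : {poly 'M[R]_n.+1}) (C : 'M[R]_n.+1) : 'M[R]_n.+1 :=
  \sum_(k < size f) f`_k * C ^+ k.
Definition lsubst n (f : {poly 'M[R]_n.+1}) (C : 'M[R]_n.+1) : 'M[R]_n.+1 :=
  \sum_(k < size f) C ^+ k * f`_k.

Definition fentry n (f : {poly 'M[R]_n.+1}) (i j : 'I_n.+1) : {poly R} :=
  \poly_(k < size f) (f`_k i j).

Definition IntR_T m (S I : {pred R}) (g : {poly R}) : Prop :=
  forall C : 'M[R]_m, Tmx S C -> Tmx I (peval g C).

(* Value of the path polynomial p_ij^(k) at the assignment x_ab := sigma a b:
   sum over i = i_1 <= ... <= i_{k+1} = j of x_{i_1 i_2} ... x_{i_k i_{k+1}}.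
   (Empty product for k = 0, giving delta_ij; empty sum when i > j.) *)
Definition pathp (k i j : nat) (sigma : nat -> nat -> R) : R :=
  \sum_(s : (k.+1).-tuple 'I_j.+1 |
          [&& head 0%N (map val s) == i, last 0%N (map val s) == j
            & sorted leq (map val s)])
    \prod_(l < k) sigma (nth 0%N (map val s) l) (nth 0%N (map val s) l.+1).

Definition ipath (g : {poly R}) (i j : nat) (sigma : nat -> nat -> R) : R :=
  \sum_(k < size g) g`_k * pathp k i j sigma.

Definition Int_star (S I : {pred R}) (P : (nat -> nat -> R) -> R) : Prop :=
  forall sigma : nat -> nat -> R, (forall a b, sigma a b \in S) -> P sigma \in I.

End Defs.

(* Main.v *)
Require Import Defs.
From HB Require Import structures.
From mathcomp Require Import all_boot all_order all_algebra.
From mathcomp Require Import zify.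
Set Implicit Arguments. Unset Strict Implicit. Unset Printing Implicit Defensive.
Import Order.TTheory GRing.Theory Num.Theory.
Local Open Scope ring_scope.

Section PR.
Variable R : comNzRingType.
Implicit Types (σ : nat -> nat -> R).

Fixpoint pr σ (k a b : nat) : R :=
  if k is k'.+1 then \sum_(a <= c < b.+1) σ a c * pr σ k' c b else (a == b)%:R.

Lemma tup1_bij b : bijective (fun x : 'I_b.+1 => [tuple x]).
Proof.
exists (fun t : 1.-tuple 'I_b.+1 => thead t) => [x|t]; first by rewrite theadE.
by case/tupleP: t => x t; apply: val_inj; rewrite /= theadE (tuple0 t).
Qed.

Lemma tupS_bij k b : bijective (fun p : 'I_b.+1 * (k.+1).-tuple 'I_b.+1 => [tuple of p.1 :: p.2]).
Proof.
exists (fun t : (k.+2).-tuple 'I_b.+1 => (thead t, [tuple of behead t])).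
  by case=> x t /=; rewrite theadE; congr (_, _); apply: val_inj.
by move=> t; rewrite [t in RHS]tuple_eta.
Qed.

Lemma pathp0 σ a b : pathp 0 a b σ = (a == b)%:R.
Proof.
rewrite /pathp (reindex _ (onW_bij _ (tup1_bij b))) /=.
under eq_bigr do rewrite big_ord0.
have [<-|nab] := eqVneq a b; rewrite ?eqxx ?(negbTE nab).
  have ha : (a < a.+1)%N by [].
  rewrite (big_pred1 (Ordinal ha)) // => x /=.
  by rewrite andbT andbb -val_eqE.
by rewrite big1 // => x /and3P [/eqP xa /eqP xb _]; move: nab; rewrite -xa xb eqxx.
Qed.

Lemma sum_single N (x0 : 'I_N) (F : 'I_N -> R) :
  (forall x, x != x0 -> F x = 0) -> \sum_x F x = F x0.
Proof. by move=> H; rewrite (bigD1 x0) //= big1 ?addr0 // => x /H. Qed.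

Lemma pathpS σ k a b : pathp k.+1 a b σ = \sum_(a <= c < b.+1) σ a c * pathp k c b σ.
Proof.
rewrite big_geq_mkord /pathp (reindex _ (onW_bij _ (tupS_bij k b))) /=.
rewrite big_mkcond.
set W := fun s : seq nat => \prod_(l < k) σ (nth 0%N s l) (nth 0%N s l.+1).
set cnd := fun (c : nat) (s : seq nat) => [&& head 0%N s == c, last 0%N s == b & sorted leq s].
transitivity (\sum_(x : 'I_b.+1) \sum_(t : (k.+1).-tuple 'I_b.+1)
   (if [&& (x : nat) == a, last (x : nat) (map val t) == b & path leq x (map val t)]
    then \prod_(l < k.+1) σ (nth 0%N ((x : nat) :: map val t) l) (nth 0%N (map val t) l) else 0)).
  by rewrite pair_big.
transitivity (\sum_(x : 'I_b.+1) \sum_(t : (k.+1).-tuple 'I_b.+1)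
   (if (x : nat) == a then (if (a <= thead t)%N && cnd (thead t) (map val t) then
      σ a (thead t) * W (map val t) else 0) else 0)).
  apply: eq_bigr => x _; apply: eq_bigr => t _.
  case/tupleP: t => y t; rewrite theadE /=.
  have [xa|] := eqVneq (x : nat) a; last by [].
  rewrite /cnd /W /= eqxx /= big_ord_recl /= xa.
  by rewrite andbCA.
rewrite (@exchange_big _ 0 (@GRing.add R)).
transitivity (\sum_(t : (k.+1).-tuple 'I_b.+1)
   (if (a <= thead t)%N && cnd (thead t) (map val t) then σ a (thead t) * W (map val t) else 0)).
  apply: eq_bigr => t _.
  case: (ltnP a b.+1) => hab.
    rewrite (@sum_single _ (Ordinal hab)) /= ?eqxx // => x.
    by rewrite -val_eqE /= => /negbTE ->.
  have ->: (a <= thead t)%N = false by rewrite leqNgt (leq_trans (ltn_ord (thead t)) hab).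
  rewrite big1 // => x _.
  by case: ifP => // /eqP xa; move: (ltn_ord x); rewrite xa ltnNge ltnW.
under [RHS]eq_bigr do rewrite mulr_sumr big_mkcond.
rewrite [RHS](@exchange_big _ 0 (@GRing.add R)) /=.
apply: eq_bigr => t _; rewrite big_mkcond (@sum_single _ (thead t)) /=.
  by rewrite /cnd /W; case: (a <= _)%N.
move=> c ct.
case: ifP => // _; case: ifP => //.
case/tupleP: t ct => y t; rewrite theadE /cnd /= => ct /andP [/eqP yc _].
by move: ct; rewrite -val_eqE /= yc eqxx.
Qed.

Lemma pathp_gt σ k a b : (b < a)%N -> pathp k a b σ = 0.
Proof.
move=> ba; case: k => [|k]; first by rewrite pathp0; case: eqP => // eab; rewrite eab ltnn in ba.
by rewrite pathpS big_geq.
Qed.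

Lemma pathp_loc σ τ k a b :
  (forall x y, (a <= x)%N -> (x <= y)%N -> (y <= b)%N -> σ x y = τ x y) ->
  pathp k a b σ = pathp k a b τ.
Proof.
elim: k a => [|k IH] a H; first by rewrite !pathp0.
rewrite !pathpS; apply: eq_big_nat => c /andP [ac cb].
rewrite H // -?ltnS // (IH c) // => x y cx xy yb.
by apply: H => //; apply: leq_trans cx.
Qed.

Lemma pathp_shift σ k a b t :
  pathp k (a + t) (b + t) σ = pathp k a b (fun x y => σ (x + t) (y + t)).
Proof.
elim: k a => [|k IH] a; first by rewrite !pathp0 eqn_add2r.
rewrite !pathpS big_addn -addSn addnK.
by apply: eq_bigr => c _; rewrite IH.
Qed.

Lemma pathp_row0 σ k a b : (a < b)%N -> (forall y, σ a y = 0) -> pathp k a b σ = 0.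
Proof.
move=> ab H; case: k => [|k]; first by rewrite pathp0; case: eqP => // eab; rewrite eab ltnn in ab.
by rewrite pathpS big1 // => c _; rewrite H mul0r.
Qed.

Lemma pathp_col0 σ k a b h : (a <= h)%N -> (h < b)%N ->
  (forall x y, (h < y)%N -> σ x y = 0) -> pathp k a b σ = 0.
Proof.
move=> ah hb H; elim: k a ah => [|k IH] a ah.
  rewrite pathp0; case: eqP => // eab; rewrite eab in ah.
  by rewrite leqNgt hb in ah.
rewrite pathpS big1_seq // => c /andP [_]; rewrite mem_index_iota => /andP [ac cb].
case: (leqP c h) => ch; first by rewrite IH // mulr0.
by rewrite H // mul0r.
Qed.

Lemma sum_restrict m lo hi (F : nat -> R) : (hi <= m)%N ->
  (forall c, (c < m)%N -> (c < lo)%N || (hi <= c)%N -> F c = 0) ->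
  \sum_(c < m) F c = \sum_(lo <= c < hi) F c.
Proof.
move=> him H; rewrite big_geq_mkord (big_ord_widen_cond m) //.
rewrite [LHS](bigID (fun c : 'I_m => (lo <= c) && (c < hi))%N) /=.
rewrite [X in _ + X]big1 ?addr0.
  by apply: eq_bigl => c; rewrite andbC.
move=> c; rewrite negb_and -!ltnNge => hc; apply: H => //.
Qed.

Definition cf m (C : 'M[R]_m) (x y : nat) : R :=
  if (insub x : option 'I_m) is Some i then
    if (insub y : option 'I_m) is Some j then C i j else 0
  else 0.

Lemma cf_ord m (C : 'M[R]_m) (i j : 'I_m) : cf C i j = C i j.
Proof. by rewrite /cf !valK. Qed.

Lemma cf_out m (C : 'M[R]_m) x y : ~~ (x < m)%N || ~~ (y < m)%N -> cf C x y = 0.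
Proof.
rewrite /cf; case/orP => h; first by rewrite insubN.
by case: insub => // i; rewrite insubN.
Qed.

Lemma cf_in m (C : 'M[R]_m) x y (hx : (x < m)%N) (hy : (y < m)%N) :
  cf C x y = C (Ordinal hx) (Ordinal hy).
Proof. by rewrite -(cf_ord C (Ordinal hx) (Ordinal hy)). Qed.

Definition mk m (σ : nat -> nat -> R) : 'M[R]_m :=
  \matrix_(x, y) (if (x <= y)%N then σ x y else 0).

Lemma cf_mk m σ x y : (x <= y)%N -> (y < m)%N -> cf (mk m σ) x y = σ x y.
Proof.
move=> xy ym; have xm := leq_ltn_trans xy ym.
by rewrite (cf_in _ xm ym) mxE /= xy.
Qed.

Lemma cf_mk0 m σ x y : (forall x, σ x y = 0) -> cf (mk m σ) x y = 0.
Proof.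
move=> H; case: (ltnP x m) => xm; last by rewrite cf_out // -leqNgt xm.
case: (ltnP y m) => ym; last by rewrite cf_out // -[X in _ || X]leqNgt ym orbT.
by rewrite (cf_in _ xm ym) mxE /= H if_same.
Qed.

Lemma cf_mk0r m σ x y : (forall y, σ x y = 0) -> cf (mk m σ) x y = 0.
Proof.
move=> H; case: (ltnP x m) => xm; last by rewrite cf_out // -leqNgt xm.
case: (ltnP y m) => ym; last by rewrite cf_out // -[X in _ || X]leqNgt ym orbT.
by rewrite (cf_in _ xm ym) mxE /= H if_same.
Qed.

Definition upper m (C : 'M[R]_m) := forall i j : 'I_m, (j < i)%N -> C i j = 0.

Lemma cf_lower m (C : 'M[R]_m) x y : upper C -> (y < x)%N -> cf C x y = 0.
Proof.
move=> uC yx; case: (ltnP x m) => xm; last by rewrite cf_out // -leqNgt xm.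
case: (ltnP y m) => ym; last by rewrite cf_out // -[X in _ || X]leqNgt ym orbT.
by rewrite (cf_in _ xm ym) uC.
Qed.

Lemma mk_upper m σ : upper (mk m σ).
Proof. by move=> i j ji; rewrite mxE leqNgt ji. Qed.

Lemma mxpow_pathp m (C : 'M[R]_m) k (i j : 'I_m) : upper C ->
  mxpow C k i j = pathp k i j (cf C).
Proof.
move=> uC; elim: k i => [|k IH] i.
  by rewrite pathp0 /mxpow /= mxE val_eqE.
rewrite /mxpow /= -/(mxpow C k) mxE pathpS.
under eq_bigr do rewrite IH -cf_ord.
rewrite (@sum_restrict _ i j.+1 (fun c => cf C i c * pathp k c j (cf C))) //.
move=> c cm /orP [ci|jc]; first by rewrite cf_lower // mul0r.
by rewrite pathp_gt // mulr0.
Qed.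

Lemma peval_ipath m (g : {poly R}) (C : 'M[R]_m) (i j : 'I_m) : upper C ->
  peval g C i j = ipath g i j (cf C).
Proof.
move=> uC; rewrite /peval /ipath summxE; apply: eq_bigr => k _.
by rewrite mxE mxpow_pathp.
Qed.

Lemma ipath_gt g σ a b : (b < a)%N -> ipath g a b σ = 0.
Proof. by move=> ba; rewrite /ipath big1 // => k _; rewrite pathp_gt // mulr0. Qed.

Lemma ipath_loc g σ τ a b :
  (forall x y, (a <= x)%N -> (x <= y)%N -> (y <= b)%N -> σ x y = τ x y) ->
  ipath g a b σ = ipath g a b τ.
Proof. by move=> H; apply: eq_bigr => k _; rewrite (pathp_loc _ H). Qed.

Lemma ipath_shift g σ a b t :
  ipath g (a + t) (b + t) σ = ipath g a b (fun x y => σ (x + t) (y + t)).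
Proof. by apply: eq_bigr => k _; rewrite pathp_shift. Qed.

Lemma ipath_poly N (c : nat -> R) a b σ :
  ipath (\poly_(k < N) c k) a b σ = \sum_(k < N) c k * pathp k a b σ.
Proof.
rewrite /ipath (big_ord_widen N (fun k => (\poly_(k < N) c k)`_k * pathp k a b σ));
  last exact: size_poly.
rewrite big_mkcond; apply: eq_bigr => k _ /=.
rewrite coef_poly ltn_ord; case: ifP => // /negbT; rewrite -leqNgt => hk.
have := nth_default 0 hk; rewrite coef_poly ltn_ord => ->.
by rewrite mul0r.
Qed.


Lemma mxpowE n (C : 'M[R]_n.+1) k : C ^+ k = mxpow C k.
Proof. by elim: k => [|k IH] //; rewrite exprS IH -mulmxE. Qed.

Lemma rsubst_sum n (f : {poly 'M[R]_n.+1}) C (i j : 'I_n.+1) : upper C ->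
  rsubst f C i j = \sum_(h : 'I_n.+1) ipath (fentry f i h) h j (cf C).
Proof.
move=> uC; rewrite /rsubst summxE.
under eq_bigr do rewrite -mulmxE mxE.
rewrite (@exchange_big _ 0 (@GRing.add R)) /=.
apply: eq_bigr => h _; rewrite /fentry ipath_poly; apply: eq_bigr => k _.
by rewrite mxpowE mxpow_pathp.
Qed.

Lemma lsubst_sum n (f : {poly 'M[R]_n.+1}) C (i j : 'I_n.+1) : upper C ->
  lsubst f C i j = \sum_(h : 'I_n.+1) ipath (fentry f h j) i h (cf C).
Proof.
move=> uC; rewrite /lsubst summxE.
under eq_bigr do rewrite -mulmxE mxE.
rewrite (@exchange_big _ 0 (@GRing.add R)) /=.
apply: eq_bigr => h _; rewrite /fentry ipath_poly; apply: eq_bigr => k _.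
by rewrite mxpowE mxpow_pathp // mulrC.
Qed.

Section Ideal.
Variables (S I : {pred R}) (hS : subring_closed S) (hI : ideal_of S I).

Lemma S0 : 0 \in S.
Proof. by case: hS => h1 hsub _; rewrite -(subrr 1) hsub. Qed.

Lemma I0 : 0 \in I.
Proof. by case: hI. Qed.

Lemma Isub a b : a \in I -> b \in I -> a - b \in I.
Proof. by case: hI => _ _ H _; apply: H. Qed.

Lemma Iadd a b : a \in I -> b \in I -> a + b \in I.
Proof. by move=> ha hb; rewrite -[b]opprK -[- b]sub0r Isub // Isub // I0. Qed.

Lemma Isum (T : Type) (r : seq T) (P : pred T) (F : T -> R) :
  (forall x, P x -> F x \in I) -> \sum_(x <- r | P x) F x \in I.
Proof. by move=> H; apply: (big_ind (fun x => x \in I)); [exact: I0 | exact: Iadd | exact: H]. Qed.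

Lemma Tmx_upper P m (C : 'M[R]_m) : Tmx P C -> upper C.
Proof. by case. Qed.

Lemma cf_S m (C : 'M[R]_m) x y : Tmx S C -> cf C x y \in S.
Proof.
case=> _ HS; case: (ltnP x m) => xm; last by rewrite cf_out ?S0 // -leqNgt xm.
case: (ltnP y m) => ym; last by rewrite cf_out ?S0 // -[X in _ || X]leqNgt ym orbT.
by rewrite (cf_in _ xm ym).
Qed.

Lemma mk_T m σ : (forall x y, σ x y \in S) -> Tmx S (mk m σ).
Proof.
move=> H; split; first exact: mk_upper.
by move=> i j; rewrite mxE; case: ifP => _; [apply: H | apply: S0].
Qed.

Lemma lemG m g (a b : 'I_m) : (a <= b)%N ->
  (forall C, Tmx S C -> peval g C a b \in I) <-> Int_star S I (ipath g a b).
Proof.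
move=> ab; split.
  move=> H σ Sσ; have := H _ (mk_T m Sσ).
  rewrite peval_ipath; last exact: mk_upper.
  rewrite (ipath_loc _ (τ := σ)) // => x y _ xy yb.
  by rewrite cf_mk // (leq_ltn_trans yb (ltn_ord b)).
move=> H C TC; rewrite peval_ipath; last exact: Tmx_upper TC.
by apply: H => x y; apply: cf_S TC.
Qed.

Lemma lemJ g a b : (a <= b)%N ->
  Int_star S I (ipath g a b) <-> Int_star S I (ipath g 0 (b - a)%N).
Proof.
move=> ab; have eb : b = ((b - a) + a)%N by rewrite subnK.
have ea : a = (0 + a)%N by [].
split.
  move=> H τ Sτ; have := H (fun x y => τ (x - a)%N (y - a)%N) (fun x y => Sτ _ _).
  rewrite [in ipath g a b]ea [in ipath g _ b]eb ipath_shift.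
  by rewrite (ipath_loc _ (τ := τ)) // => x y _ _ _; rewrite !addnK.
move=> H σ Sσ; rewrite [in ipath g a b]ea [in ipath g _ b]eb ipath_shift.
by apply: H => x y; apply: Sσ.
Qed.

Lemma lemK m g : IntR_T m S I g <-> (forall d, (d < m)%N -> Int_star S I (ipath g 0 d)).
Proof.
split.
  move=> H d dm σ Sσ; have := H _ (mk_T m Sσ); case=> _ /(_ (Ordinal (leq_ltn_trans (leq0n d) dm)) (Ordinal dm)).
  rewrite peval_ipath; last exact: mk_upper.
  rewrite (ipath_loc _ (τ := σ)) // => x y _ xy yb.
  by rewrite cf_mk // (leq_ltn_trans yb dm).
move=> H D TD; have uD := Tmx_upper TD.
split=> i j; first by move=> ji; rewrite peval_ipath // ipath_gt.
case: (ltnP j i) => ji; first by rewrite peval_ipath // ipath_gt // I0.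
apply: (proj2 (lemG g ji)) TD; apply/(lemJ g ji); apply: H.
exact: leq_ltn_trans (leq_subr i j) (ltn_ord j).
Qed.


Lemma ipath_row0 g σ a b : (a < b)%N -> (forall y, σ a y = 0) -> ipath g a b σ = 0.
Proof. by move=> ab H; rewrite /ipath big1 // => k _; rewrite pathp_row0 // mulr0. Qed.

Lemma ipath_col0 g σ a b h : (a <= h)%N -> (h < b)%N ->
  (forall x y, (h < y)%N -> σ x y = 0) -> ipath g a b σ = 0.
Proof. by move=> ah hb H; rewrite /ipath big1 // => k _; rewrite (pathp_col0 k ah hb H) mulr0. Qed.

Section F.
Variables (n : nat) (f : {poly 'M[R]_n.+1}) (hf : forall k, Tmx predT (f`_k)).

Lemma fentry_lower (i h : 'I_n.+1) a b σ : (h < i)%N -> ipath (fentry f i h) a b σ = 0.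
Proof.
move=> hi; rewrite /fentry ipath_poly big1 // => k _.
by case: (hf k) => H _; rewrite H // mul0r.
Qed.

Lemma r_restrict (i j : 'I_n.+1) C : upper C ->
  rsubst f C i j = \sum_(i <= h < j.+1) ipath (fentry f i (inord h)) h j (cf C).
Proof.
move=> uC; rewrite rsubst_sum //.
rewrite -(@sum_restrict n.+1 i j.+1 (fun h => ipath (fentry f i (inord h)) h j (cf C))) //.
  by apply: eq_bigr => h _; rewrite inord_val.
move=> h hn /orP [hi|jh]; first by rewrite fentry_lower // inordK.
by rewrite ipath_gt.
Qed.

Lemma l_restrict (i j : 'I_n.+1) C : upper C ->
  lsubst f C i j = \sum_(i <= h < j.+1) ipath (fentry f (inord h) j) i h (cf C).
Proof.
move=> uC; rewrite lsubst_sum //.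
rewrite -(@sum_restrict n.+1 i j.+1 (fun h => ipath (fentry f (inord h) j) i h (cf C))) //.
  by apply: eq_bigr => h _; rewrite inord_val.
move=> h hn /orP [hi|jh]; first by rewrite ipath_gt.
by rewrite fentry_lower // inordK.
Qed.

Definition Crow m (C : 'M[R]_m) t := mk m (fun x y => if (t <= x)%N then cf C x y else 0).
Definition Ccol m (C : 'M[R]_m) t := mk m (fun x y => if (y <= t)%N then cf C x y else 0).

Lemma Crow_T m (C : 'M[R]_m) t : Tmx S C -> Tmx S (Crow C t).
Proof. by move=> TC; apply: mk_T => x y; case: ifP => _; [apply: cf_S TC | apply: S0]. Qed.

Lemma Ccol_T m (C : 'M[R]_m) t : Tmx S C -> Tmx S (Ccol C t).
Proof. by move=> TC; apply: mk_T => x y; case: ifP => _; [apply: cf_S TC | apply: S0]. Qed.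

Lemma r_trunc (i j : 'I_n.+1) C t : (i <= t <= j)%N ->
  rsubst f (Crow C t) i j = \sum_(t <= h < j.+1) ipath (fentry f i (inord h)) h j (cf C).
Proof.
move=> /andP [it tj]; rewrite r_restrict; last exact: mk_upper.
rewrite (@big_cat_nat _ _ _ t) //=; last by rewrite ltnW.
rewrite big1_seq ?add0r.
  apply: eq_big_nat => h /andP [th hj]; apply: ipath_loc => x y hx xy yj.
  rewrite cf_mk //; last by rewrite (leq_ltn_trans yj (ltn_ord j)).
  by rewrite (leq_trans th hx).
move=> h /andP [_]; rewrite mem_index_iota => /andP [_ ht].
apply: ipath_row0; first exact: leq_trans ht tj.
by move=> y; apply: cf_mk0r => z; rewrite leqNgt ht.
Qed.

Lemma l_trunc (i j : 'I_n.+1) C t : (i <= t <= j)%N ->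
  lsubst f (Ccol C t) i j = \sum_(i <= h < t.+1) ipath (fentry f (inord h) j) i h (cf C).
Proof.
move=> /andP [it tj]; rewrite l_restrict; last exact: mk_upper.
rewrite (@big_cat_nat _ _ _ t.+1) //=; last by rewrite ltnW.
rewrite [X in _ + X]big1_seq ?addr0.
  apply: eq_big_nat => h /andP [ih ht]; apply: ipath_loc => x y hx xy yh.
  have ht' : (h <= t)%N by [].
  rewrite cf_mk //; last by rewrite (leq_ltn_trans (leq_trans yh (leq_trans ht' tj)) (ltn_ord j)).
  by rewrite (leq_trans yh ht').
move=> h /andP [_]; rewrite mem_index_iota => /andP [th _].
apply: (ipath_col0 _ it th) => x y ty.
by apply: cf_mk0 => z; rewrite leqNgt ty.
Qed.


Lemma rP12 (i : 'I_n.+1) :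
  (forall C, Tmx S C -> forall j : 'I_n.+1, rsubst f C i j \in I) <->
  (forall C, Tmx S C -> forall h j : 'I_n.+1, (i <= h <= j)%N ->
                peval (fentry f i h) C h j \in I).
Proof.
split.
  move=> H C TC h j /andP [ih hj]; have uC := Tmx_upper TC.
  rewrite peval_ipath //.
  set F := fun h' => ipath (fentry f i (inord h')) h' j (cf C).
  have -> : ipath (fentry f i h) h j (cf C) = F h by rewrite /F inord_val.
  have T1 : \sum_(h <= h' < j.+1) F h' \in I.
    by rewrite -(@r_trunc i j C h) ?ih ?hj //; apply: H (Crow_T h TC) j.
  have T2 : \sum_(h.+1 <= h' < j.+1) F h' \in I.
    case: (ltnP h j) => hj'.
      by rewrite -(@r_trunc i j C h.+1) ?hj' ?(leq_trans ih) //; apply: H (Crow_T h.+1 TC) j.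
    by rewrite big_geq ?I0.
  by rewrite big_ltn // in T1; have := Isub T1 T2; rewrite addrK.
move=> H C TC j; have uC := Tmx_upper TC.
rewrite rsubst_sum //; apply: Isum => h _.
case: (ltnP h i) => hi; first by rewrite fentry_lower // I0.
case: (ltnP j h) => jh; first by rewrite ipath_gt // I0.
by rewrite -peval_ipath //; apply: H => //; rewrite hi jh.
Qed.

Lemma rP23 (i : 'I_n.+1) :
  (forall C, Tmx S C -> forall h j : 'I_n.+1, (i <= h <= j)%N ->
                peval (fentry f i h) C h j \in I) <->
  (forall h j : 'I_n.+1, (i <= h <= j)%N -> Int_star S I (ipath (fentry f i h) h j)).
Proof.
split.
  move=> H h j hij; case/andP: (hij) => _ hj.
  by apply/(lemG _ hj) => C TC; apply: H.
move=> H C TC h j hij; case/andP: (hij) => _ hj.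
exact: (proj2 (lemG _ hj) (H h j hij)).
Qed.

Lemma rP34 (i : 'I_n.+1) :
  (forall h j : 'I_n.+1, (i <= h <= j)%N -> Int_star S I (ipath (fentry f i h) h j)) <->
  (forall h : 'I_n.+1, (i <= h)%N -> IntR_T (n.+1 - h) S I (fentry f i h)).
Proof.
split.
  move=> H h ih; apply/lemK => d dm.
  have hd : (h + d < n.+1)%N by move: dm; have := ltn_ord h; lia.
  have := H h (Ordinal hd); rewrite /= ih leq_addr => /(_ isT).
  by move/(lemJ _ (leq_addr d h)); rewrite addKn.
move=> H h j /andP [ih hj]; apply/(lemJ _ hj).
apply: (proj1 (lemK _ _) (H h ih)).
by have := ltn_ord j; move: hj; lia.
Qed.

Lemma lP12 (j : 'I_n.+1) :
  (forall C, Tmx S C -> forall i : 'I_n.+1, lsubst f C i j \in I) <->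
  (forall C, Tmx S C -> forall i h : 'I_n.+1, (i <= h <= j)%N ->
                peval (fentry f h j) C i h \in I).
Proof.
split.
  move=> H C TC i h /andP [ih hj]; have uC := Tmx_upper TC.
  rewrite peval_ipath //.
  set F := fun h' => ipath (fentry f (inord h') j) i h' (cf C).
  have -> : ipath (fentry f h j) i h (cf C) = F h by rewrite /F inord_val.
  have T1 : \sum_(i <= h' < h.+1) F h' \in I.
    by rewrite -(@l_trunc i j C h) ?ih ?hj //; apply: H (Ccol_T h TC) i.
  have T2 : \sum_(i <= h' < h) F h' \in I.
    case: (ltnP i h) => ih'.
      have e : (h : nat) = (h.-1).+1 by rewrite prednK // (leq_ltn_trans (leq0n i) ih').
      rewrite [in X in X \in I]e -(@l_trunc i j C h.-1).
        by apply: H (Ccol_T h.-1 TC) i.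
      by rewrite -ltnS -e ih' /= (leq_trans (leq_pred h) hj).
    by rewrite big_geq ?I0.
  rewrite big_nat_recr // in T1.
  have -> : F h = (\sum_(i <= h' < h) F h' + F h) - \sum_(i <= h' < h) F h'.
    by rewrite addrAC subrr add0r.
  exact: Isub T1 T2.
move=> H C TC i; have uC := Tmx_upper TC.
rewrite lsubst_sum //; apply: Isum => h _.
case: (ltnP h i) => hi; first by rewrite ipath_gt // I0.
case: (ltnP j h) => jh; first by rewrite fentry_lower // I0.
by rewrite -peval_ipath //; apply: H => //; rewrite hi jh.
Qed.

Lemma lP23 (j : 'I_n.+1) :
  (forall C, Tmx S C -> forall i h : 'I_n.+1, (i <= h <= j)%N ->
                peval (fentry f h j) C i h \in I) <->
  (forall i h : 'I_n.+1, (i <= h <= j)%N -> Int_star S I (ipath (fentry f h j) i h)).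
Proof.
split.
  move=> H i h hij; case/andP: (hij) => ih _.
  by apply/(lemG _ ih) => C TC; apply: H.
move=> H C TC i h hij; case/andP: (hij) => ih _.
exact: (proj2 (lemG _ ih) (H i h hij)).
Qed.

Lemma lP34 (j : 'I_n.+1) :
  (forall i h : 'I_n.+1, (i <= h <= j)%N -> Int_star S I (ipath (fentry f h j) i h)) <->
  (forall h : 'I_n.+1, (h <= j)%N -> IntR_T h.+1 S I (fentry f h j)).
Proof.
split.
  move=> H h hj; apply/lemK => d dm.
  have hd : (h - d < n.+1)%N by have := ltn_ord h; lia.
  have := H (Ordinal hd) h; rewrite /= leq_subr hj => /(_ isT).
  by move/(lemJ _ (leq_subr d h)); rewrite subKn.
move=> H i h /andP [ih hj]; apply/(lemJ _ ih).
apply: (proj1 (lemK _ _) (H h hj)).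
by rewrite ltnS leq_subr.
Qed.

End F.
End Ideal.
End PR.

Unset Implicit Arguments.
Set Strict Implicit.

Theorem lemma4p1 (R : comNzRingType) (S I : {pred R})
    (hS : subring_closed S) (hI : ideal_of S I)
    (n : nat) (f : {poly 'M[R]_n.+1})
    (hf : forall k, Tmx predT (f`_k)) :
  (forall i : 'I_n.+1,
    let P1 := forall C, Tmx S C -> forall j : 'I_n.+1, rsubst f C i j \in I in
    let P2 := forall C, Tmx S C -> forall h j : 'I_n.+1, (i <= h <= j)%N ->
                peval (fentry f i h) C h j \in I in
    let P3 := forall h j : 'I_n.+1, (i <= h <= j)%N ->
                Int_star S I (ipath (fentry f i h) h j) in
    let P4 := forall h : 'I_n.+1, (i <= h)%N ->
                IntR_T (n.+1 - h) S I (fentry f i h) in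
    (P1 <-> P2) /\ (P1 <-> P3) /\ (P1 <-> P4))
  /\
  (forall j : 'I_n.+1,
    let Q1 := forall C, Tmx S C -> forall i : 'I_n.+1, lsubst f C i j \in I in
    let Q2 := forall C, Tmx S C -> forall i h : 'I_n.+1, (i <= h <= j)%N ->
                peval (fentry f h j) C i h \in I in
    let Q3 := forall i h : 'I_n.+1, (i <= h <= j)%N ->
                Int_star S I (ipath (fentry f h j) i h) in
    let Q4 := forall h : 'I_n.+1, (h <= j)%N ->
                IntR_T h.+1 S I (fentry f h j) in
    (Q1 <-> Q2) /\ (Q1 <-> Q3) /\ (Q1 <-> Q4)).
Proof.
split=> x /=.
  have A := rP12 hS hI hf x; have B := rP23 I hS f x; have C := rP34 hS hI f x.
  by split; [|split]; [exact: A | exact: iff_trans A B | exact: iff_trans (iff_trans A B) C].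
have A := lP12 hS hI hf x; have B := lP23 I hS f x; have C := lP34 hS hI f x.
by split; [|split]; [exact: A | exact: iff_trans A B | exact: iff_trans (iff_trans A B) C].
Qed.
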